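(* Let $\Gamma$ be a countably infinite group with a strictly decreasing sequence $\{\Gamma_n\}$ of finite-index normal subgroups with trivial intersection, $X=\varprojlim\Gamma/\Gamma_n$ with left translation action and quotient maps $\pi_n:X\to\Gamma/\Gamma_n$, and for $n\ge2$ let $\gamma_n\in\Gamma_{n-1}\setminus\Gamma_n$, $C_n=\pi_n^{-1}(\gamma_n\Gamma_n)$ and $X_+=\bigcup_{n\ge2}C_n$. Let $s_1,s_2,s_3\in\Gamma$ and $x\in X$ with $s_1x\in C_{n_1}$, $s_2x\in C_{n_2}$, $s_3x\in C_{n_3}$ where $n_1<\min(n_2,n_3)$. Then there is no $y\in X$ with $s_1y\notin X_+$, $s_2y\notin X_+$ and $s_3y\in X_+$.
   Context: $X=\varprojlim\Gamma/\Gamma_n$ is the compact group of compatible sequences in $\prod_n\Gamma/\Gamma_n$ containing $\Gamma$ as a subgroup; $\Gamma$ acts by left translation. *)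

(* Defs.v *)
From Stdlib Require Import List Arith.

Definition is_group {G : Type} (mul : G -> G -> G) (inv : G -> G) (e : G) : Prop :=
  (forall a b c, mul a (mul b c) = mul (mul a b) c) /\
  (forall a, mul e a = a) /\ (forall a, mul a e = a) /\
  (forall a, mul (inv a) a = e) /\ (forall a, mul a (inv a) = e).

Definition countably_infinite (G : Type) : Prop :=
  exists f : nat -> G, (forall m n, f m = f n -> m = n) /\ (forall g, exists n, f n = g).

Section Profinite.
Context {G : Type} (mul : G -> G -> G) (inv : G -> G) (e : G).

Definition is_subgroup (H : G -> Prop) : Prop :=
  H e /\ (forall a b, H a -> H b -> H (mul a b)) /\ (forall a, H a -> H (inv a)).

Definition is_normal (H : G -> Prop) : Prop :=
  forall g h, H h -> H (mul (mul g h) (inv g)).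

Definition finite_index (H : G -> Prop) : Prop :=
  exists reps : list G, forall g, exists r, In r reps /\ H (mul (inv r) g).

(* The chain Gamma_1 > Gamma_2 > ... (indices n >= 1; Gamma 0 is unused). *)
Definition good_chain (Gam : nat -> G -> Prop) : Prop :=
  (forall n, 1 <= n -> is_subgroup (Gam n) /\ is_normal (Gam n) /\ finite_index (Gam n)) /\
  (forall n, 1 <= n -> (forall g, Gam (S n) g -> Gam n g) /\
                       exists g, Gam n g /\ ~ Gam (S n) g) /\
  (forall g, (forall n, 1 <= n -> Gam n g) -> g = e).

(* Points of X = lim Gamma/Gamma_n, encoded by sequences of coset representatives
   x n (representing x n Gamma_n) that are compatible:
   pi_n(x_{n+1} Gamma_{n+1}) = x_n Gamma_n. *)
Definition inX (Gam : nat -> G -> Prop) (x : nat -> G) : Prop :=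
  forall n, 1 <= n -> Gam n (mul (inv (x n)) (x (S n))).

Definition act (s : G) (x : nat -> G) : nat -> G := fun n => mul s (x n).

(* x in C_n  iff  pi_n(x) = gamma_n Gamma_n *)
Definition inC (Gam : nat -> G -> Prop) (gam : nat -> G) (n : nat) (x : nat -> G) : Prop :=
  Gam n (mul (inv (gam n)) (x n)).

Definition inXplus (Gam : nat -> G -> Prop) (gam : nat -> G) (x : nat -> G) : Prop :=
  exists n, 2 <= n /\ inC Gam gam n x.

End Profinite.

(* Main.v *)
Require Import Defs.
From Stdlib Require Import Arith Lia.

Theorem lemma4p6 (G : Type) (mul : G -> G -> G) (inv : G -> G) (e : G)
  (Hgrp : is_group mul inv e) (Hcount : countably_infinite G)
  (Gam : nat -> G -> Prop) (Hchain : good_chain mul inv e Gam)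
  (gam : nat -> G)
  (Hgam : forall n, 2 <= n -> Gam (n - 1) (gam n) /\ ~ Gam n (gam n))
  (s1 s2 s3 : G) (x : nat -> G) (hx : inX mul inv Gam x)
  (n1 n2 n3 : nat) (h12 : n1 < n2) (h13 : n1 < n3)
  (hx1 : 2 <= n1 /\ inC mul inv Gam gam n1 (act mul s1 x))
  (hx2 : 2 <= n2 /\ inC mul inv Gam gam n2 (act mul s2 x))
  (hx3 : 2 <= n3 /\ inC mul inv Gam gam n3 (act mul s3 x)) :
  ~ (exists y : nat -> G, inX mul inv Gam y /\
       ~ inXplus mul inv Gam gam (act mul s1 y) /\
       ~ inXplus mul inv Gam gam (act mul s2 y) /\
       inXplus mul inv Gam gam (act mul s3 y)).
Proof.
  destruct Hgrp as (A & L & R & Li & Ri).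
  destruct Hchain as (Hsub & Hdec & _).
  unfold inC, act in *.
  assert (II : forall a, inv (inv a) = a).
  { intro a. rewrite <- (R (inv (inv a))), <- (Li a), A, Li, L. reflexivity. }
  assert (Ie : inv e = e). { rewrite <- (L (inv e)), Ri. reflexivity. }
  assert (IM : forall a b, inv (mul a b) = mul (inv b) (inv a)).
  { intros a b.
    assert (E1 : mul (mul a b) (mul (inv b) (inv a)) = e).
    { rewrite A, <- (A a b), Ri, R, Ri. reflexivity. }
    rewrite <- (R (inv (mul a b))), <- E1, A, Li, L. reflexivity. }
  assert (S0 : forall k, 1 <= k -> Gam k e) by (intros k hk; apply (Hsub k hk)).
  assert (SM : forall k a b, 1 <= k -> Gam k a -> Gam k b -> Gam k (mul a b))
    by (intros k a b hk; apply (Hsub k hk)).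
  assert (SI : forall k a, 1 <= k -> Gam k a -> Gam k (inv a))
    by (intros k a hk; apply (Hsub k hk)).
  assert (SN : forall k g h, 1 <= k -> Gam k h -> Gam k (mul (mul (inv g) h) g)).
  { intros k g h hk H. pose proof (proj1 (proj2 (Hsub k hk)) (inv g) h H) as H'.
    rewrite II in H'. exact H'. }
  assert (Mono : forall k n g, 1 <= k -> k <= n -> Gam n g -> Gam k g).
  { intros k n g hk hkn. induction hkn; auto.
    intro H. apply IHhkn. apply (Hdec m). lia. exact H. }
  set (rel := fun k a b => Gam k (mul (inv a) b)).
  assert (Rsym : forall k a b, 1 <= k -> rel k a b -> rel k b a).
  { unfold rel; intros k a b hk H. apply SI in H; auto. rewrite IM, II in H. exact H. }
  assert (Rtr : forall k a b c, 1 <= k -> rel k a b -> rel k b c -> rel k a c).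
  { unfold rel; intros k a b c hk H1 H2. pose proof (SM _ _ _ hk H1 H2) as H.
    rewrite <- A, (A b), Ri, L in H. exact H. }
  assert (Rl : forall k g a b, rel k a b -> rel k (mul g a) (mul g b)).
  { unfold rel; intros k g a b H. rewrite IM, <- A, (A (inv g)), Li, L. exact H. }
  assert (Rr : forall k c a b, 1 <= k -> rel k a b -> rel k (mul a c) (mul b c)).
  { unfold rel; intros k c a b hk H. rewrite IM, <- A, (A (inv a)).
    rewrite A. apply SN; auto. }
  assert (Rr' : forall k c a b, 1 <= k -> rel k (mul a c) (mul b c) -> rel k a b).
  { intros k c a b hk H. apply (Rr k (inv c)) in H; auto.
    rewrite <- !A, Ri, !R in H. exact H. }
  assert (Mrel : forall k n a b, 1 <= k -> k <= n -> rel n a b -> rel k a b).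
  { unfold rel; intros; eapply Mono; eauto. }
  assert (F1 : forall z, inX mul inv Gam z -> forall k n, 1 <= k -> k <= n -> rel k (z k) (z n)).
  { intros z hz k n hk hkn. induction hkn.
    - unfold rel. rewrite Li. auto.
    - eapply Rtr; eauto. apply (Mrel k m); auto. apply hz. lia. }
  assert (Xact : forall s z, inX mul inv Gam z -> inX mul inv Gam (fun n => mul s (z n))).
  { intros s z hz n hn. apply Rl. apply hz. exact hn. }
  assert (Triv : forall z, inX mul inv Gam z -> forall k n, 1 <= k -> k <= n ->
                   rel n e (z n) -> rel k e (z k)).
  { intros z hz k n hk hkn H. apply (Rtr _ _ (z n)); auto.
    apply (Mrel k n); auto. }
  assert (Ctriv : forall z n, inX mul inv Gam z -> 2 <= n -> rel n (gam n) (z n) ->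
                   rel (n-1) e (z (n-1))).
  { intros z n hz hn H.
    apply (Mrel (n-1) n) in H; try lia.
    apply (Rtr _ e (gam n)) in H; try lia.
    - apply (Rtr _ _ (z n)); [lia| exact H |].
      apply Rsym; [lia|]. apply F1; auto; lia.
    - unfold rel. rewrite Ie, L. apply Hgam. exact hn. }
  assert (Key : forall z, rel n1 e (mul s2 z) -> rel n1 (mul s1 z) (mul s1 (inv s2))).
  { intros z H. apply Rsym in H; [|lia]. apply (Rl _ (mul s1 (inv s2))) in H.
    rewrite R, <- A, (A (inv s2)), Li, L in H. exact H. }
  destruct hx1 as [h1 c1], hx2 as [h2 c2], hx3 as [h3 c3].
  change (rel n1 (gam n1) (mul s1 (x n1))) in c1.
  change (rel n2 (gam n2) (mul s2 (x n2))) in c2.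
  change (rel n3 (gam n3) (mul s3 (x n3))) in c3.
  intros (y & hy & n1y & n2y & (m & hm & hy3)).
  change (rel m (gam m) (mul s3 (y m))) in hy3.
  assert (T2 : rel n1 e (mul s2 (x n1))).
  { apply (Triv (fun n => mul s2 (x n)) (Xact _ _ hx) n1 (n2-1)); try lia.
    apply (Ctriv (fun n => mul s2 (x n))); auto. }
  assert (T3 : rel n1 e (mul s3 (x n1))).
  { apply (Triv (fun n => mul s3 (x n)) (Xact _ _ hx) n1 (n3-1)); try lia.
    apply (Ctriv (fun n => mul s3 (x n))); auto. }
  assert (R23 : rel n1 s2 s3).
  { apply (Rr' _ (x n1)); [lia|]. apply (Rtr _ _ e); [lia| |exact T3].
    apply Rsym; [lia|exact T2]. }
  destruct (le_lt_dec m n1) as [Hm|Hm].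
  - apply n2y. exists m. split; auto. change (rel m (gam m) (mul s2 (y m))).
    apply (Rtr _ _ (mul s3 (y m))); [lia|exact hy3|]. apply Rsym; [lia|].
    apply Rr; [lia|]. apply (Mrel m n1); auto; lia.
  - assert (T3y : rel n1 e (mul s3 (y n1))).
    { apply (Triv (fun n => mul s3 (y n)) (Xact _ _ hy) n1 (m-1)); try lia.
      apply (Ctriv (fun n => mul s3 (y n))); auto. }
    assert (T2y : rel n1 e (mul s2 (y n1))).
    { apply (Rtr _ _ (mul s3 (y n1))); [lia|exact T3y|]. apply Rsym; [lia|].
      apply Rr; [lia|exact R23]. }
    apply n1y. exists n1. split; auto. change (rel n1 (gam n1) (mul s1 (y n1))).
    apply (Rtr _ _ (mul s1 (x n1))); [lia|exact c1|].
    apply (Rtr _ _ (mul s1 (inv s2))); [lia|apply Key; exact T2|].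
    apply Rsym; [lia|]. apply Key; exact T2y.
Qed.
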